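(* Let $\alpha>1$ and $D,R_{tot},L_0>0$. For $\mu>0$ let $\sigma_0=\sigma_0^{(\mu)}$ be the positive solution of $-u''=-u+u^\alpha$ on $[-\mu L_0,\mu L_0]$ with zero Dirichlet data, and $\|\sigma_0\|_1=\int_{-\mu L_0}^{\mu L_0}\sigma_0$. (i) Let $k_{nf},k_{pf}>0$ satisfy $$\Lambda(k_{nf},k_{pf})=\frac{k_{nf}}{k_{pf}}-\frac{1}{\alpha}\left(\frac{\alpha-1}{\alpha}\sqrt{\frac{k_{nf}}{D}}\frac{R_{tot}}{\|\sigma_0\|_1}\right)^{\alpha-1}\le 0,$$ where $\sigma_0=\sigma_0^{(\mu)}$ with $\mu=\sqrt{k_{nf}/D}$. Let $\lambda>0$ be a root of $g(\lambda)=\frac{k_{nf}}{k_{pf}}-\lambda^{\alpha-1}+\frac{1}{R_{tot}}\lambda^{\alpha}\frac{1}{\mu}\|\sigma_0\|_1$. Then $\mu>0$, $\lambda>0$ and $\Lambda^*(\mu,\lambda):=\mu R_{tot}-\lambda\|\sigma_0\|_1>0$. (ii) Conversely, let $\mu>0$, $\lambda>0$ with $\Lambda^*(\mu,\lambda)>0$, and define $k_{nf}=D\mu^2$ and $$k_{pf}=\frac{D\mu^2}{\lambda^{\alpha-1}-\frac{\lambda^{\alpha}\|\sigma_0\|_1}{\mu R_{tot}}}.$$ Then $k_{nf}>0$, $k_{pf}>0$, $\Lambda(k_{nf},k_{pf})\le0$, and $\lambda$ is a root of $g$ for these parameters. Thus the constrained model $Y_j=R(X_j;k_{nf},k_{pf})+\epsilon_j$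 (with $R$ a solution of the integro-differential equation $-DR''=-k_{nf}R+k_{pf}R^\alpha(1-\int_{-L_0}^{L_0}R/R_{tot})$, $R(\pm L_0)=0$) is equivalently reparametrized as $Y_j=\lambda\sigma_0(\mu X_j)+\epsilon_j$ subject to $\mu>0$, $\lambda>0$, $\Lambda^*(\mu,\lambda)>0$.
   Context: The positive solution of $-u''=-u+u^\alpha$ with zero Dirichlet data on a bounded symmetric interval exists and is unique (part of the setting). For given $(k_{nf},k_{pf})$, $\lambda\sigma_0(\mu x)$ with $\mu=\sqrt{k_{nf}/D}$ solves the integro-differential equation iff $g(\lambda)=0$. *)

(* Defs.v *)
From Stdlib Require Import Reals.
Open Scope R_scope.

Definition is_pos_dirichlet_sol (alpha a : R) (u : R -> R) : Prop :=
  (exists u' u'' : R -> R,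
      forall x, -a < x < a ->
        derivable_pt_lim u x (u' x) /\
        derivable_pt_lim u' x (u'' x) /\
        - u'' x = - u x + Rpower (u x) alpha) /\
  (forall x, -a <= x <= a -> continuity_pt u x) /\
  u (-a) = 0 /\ u a = 0 /\
  (forall x, -a < x < a -> 0 < u x).

(* N mu stands for ||sigma_0^(mu)||_1 . *)

Definition Lambda (alpha D Rtot : R) (N : R -> R) (knf kpf : R) : R :=
  knf / kpf
  - / alpha * Rpower ((alpha - 1) / alpha * sqrt (knf / D) * Rtot
                      / N (sqrt (knf / D))) (alpha - 1).

Definition g (alpha D Rtot : R) (N : R -> R) (knf kpf lam : R) : R :=
  knf / kpf - Rpower lam (alpha - 1)
  + / Rtot * Rpower lam alpha * / sqrt (knf / D) * N (sqrt (knf / D)).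

Definition LambdaStar (Rtot : R) (N : R -> R) (mu lam : R) : R :=
  mu * Rtot - lam * N mu.

(* Main.v *)
Require Import Defs.
From Stdlib Require Import Reals.
Open Scope R_scope.
From Stdlib Require Import Lra.

Lemma int_pos (f : R -> R) (a : R) (pr : Riemann_integrable f (-a) a) :
  0 < a -> (forall x, -a < x < a -> 0 < f x) -> continuity_pt f 0 ->
  0 < RiemannInt pr.
Proof.
  intros Ha Hp Hc.
  assert (H0 : 0 < f 0) by (apply Hp; lra).
  unfold continuity_pt, continue_in, limit1_in, limit_in in Hc; simpl in Hc.
  destruct (Hc (f 0 / 2)) as [alp [Halp Hal]]; [lra|].
  set (d := Rmin alp a / 2).
  assert (Hd : 0 < d /\ d < a /\ d < alp).
  { unfold d; pose proof (Rmin_l alp a); pose proof (Rmin_r alp a);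
    assert (0 < Rmin alp a) by (apply Rmin_glb_lt; lra). lra. }
  assert (Hmid : forall x, -d < x < d -> f 0 / 2 <= f x).
  { intros x Hx. destruct (Req_dec x 0) as [->|Hn]; [lra|].
    assert (Hl : R_dist (f x) (f 0) < f 0 / 2).
    { apply Hal. split. split; [exact I| congruence].
      unfold R_dist. apply Rabs_def1; lra. }
    unfold R_dist in Hl. apply Rabs_def2 in Hl. lra. }
  assert (pr1 : Riemann_integrable f (-a) (-d)) by (apply (RiemannInt_P22 pr); lra).
  assert (prr : Riemann_integrable f (-d) a) by (apply (RiemannInt_P23 pr); lra).
  assert (pr2 : Riemann_integrable f (-d) d) by (apply (RiemannInt_P22 prr); lra).
  assert (pr3 : Riemann_integrable f d a) by (apply (RiemannInt_P23 prr); lra).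
  rewrite <- (RiemannInt_P26 pr1 prr pr).
  rewrite <- (RiemannInt_P26 pr2 pr3 prr).
  assert (I1 : 0 <= RiemannInt pr1).
  { pose proof (RiemannInt_P19 (RiemannInt_P14 (-a) (-d) 0) pr1) as H.
    rewrite RiemannInt_P15 in H. assert (0 * (-d - -a) <= RiemannInt pr1); [|lra].
    apply H; [lra|]. intros x Hx. unfold fct_cte. apply Rlt_le, Hp; lra. }
  assert (I3 : 0 <= RiemannInt pr3).
  { pose proof (RiemannInt_P19 (RiemannInt_P14 d a 0) pr3) as H.
    rewrite RiemannInt_P15 in H. assert (0 * (a - d) <= RiemannInt pr3); [|lra].
    apply H; [lra|]. intros x Hx. unfold fct_cte. apply Rlt_le, Hp; lra. }
  assert (I2 : f 0 / 2 * (d - - d) <= RiemannInt pr2).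
  { pose proof (RiemannInt_P19 (RiemannInt_P14 (-d) d (f 0 / 2)) pr2) as H.
    rewrite RiemannInt_P15 in H. apply H; [lra|]. intros x Hx. unfold fct_cte. apply Hmid; lra. }
  assert (0 < f 0 / 2 * (d - - d)) by (apply Rmult_lt_0_compat; lra).
  lra.
Qed.

Lemma key (alpha s : R) : 1 < alpha -> 0 < s < 1 ->
  Rpower s (alpha - 1) * (1 - s) <= / alpha * Rpower ((alpha - 1) / alpha) (alpha - 1).
Proof.
  intros Ha Hs.
  set (p := (alpha - 1) / alpha).
  assert (Hp : 0 < p) by (unfold p; apply Rdiv_lt_0_compat; lra).
  assert (L1 : ln (s / p) <= s / p - 1).
  { pose proof (exp_ineq1_le (ln (s/p))). rewrite exp_ln in H; [lra|].
    apply Rdiv_lt_0_compat; lra. }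
  assert (L2 : ln (alpha * (1 - s)) <= alpha * (1 - s) - 1).
  { pose proof (exp_ineq1_le (ln (alpha * (1 - s)))). rewrite exp_ln in H; [lra|].
    apply Rmult_lt_0_compat; lra. }
  unfold Rdiv in L1; rewrite ln_mult, ln_Rinv in L1 by (try apply Rinv_0_lt_compat; lra). rewrite ln_mult in L2 by lra.
  assert (E : (alpha - 1) * (s / p - 1) + (alpha * (1 - s) - 1) = 0).
  { unfold p. field. lra. }
  assert (Ex : (alpha - 1) * ln s + ln (1 - s) + ln alpha <= (alpha - 1) * ln p).
  { assert ((alpha - 1) * (ln s - ln p) <= (alpha - 1) * (s / p - 1)).
    { apply Rmult_le_compat_l; lra. } lra. }
  assert (Ex' : exp ((alpha - 1) * ln s + ln (1 - s) + ln alpha) <= exp ((alpha - 1) * ln p)) by (destruct Ex as [Ex|Ex]; [left; apply exp_increasing; exact Ex | right; rewrite Ex; reflexivity]). clear Ex. rename Ex' into Ex. rewrite !exp_plus, exp_ln, exp_ln in Ex by lra.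
  unfold Rpower.
  apply Rmult_le_reg_l with alpha; [lra|].
  rewrite <- (Rmult_assoc alpha (/ alpha)), Rinv_r, Rmult_1_l by lra.
  rewrite !(Rmult_comm (alpha - 1)) in Ex. rewrite !(Rmult_comm (alpha - 1)). nra.
Qed.

Lemma Rpower_split (l a : R) : 0 < l -> Rpower l a = Rpower l (a - 1) * l.
Proof.
  intros Hl. replace a with ((a - 1) + 1) at 1 by ring.
  rewrite Rpower_plus, Rpower_1 by lra. reflexivity.
Qed.

Theorem proposition1 (alpha D Rtot L0 : R)
  (sigma0 : R -> R -> R) (N : R -> R) :
  1 < alpha -> 0 < D -> 0 < Rtot -> 0 < L0 ->
  (forall mu, 0 < mu -> is_pos_dirichlet_sol alpha (mu * L0) (sigma0 mu)) ->
  (forall mu, 0 < mu ->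
     exists pr : Riemann_integrable (sigma0 mu) (- (mu * L0)) (mu * L0),
       RiemannInt pr = N mu) ->
  (forall knf kpf lam : R,
     0 < knf -> 0 < kpf ->
     Lambda alpha D Rtot N knf kpf <= 0 ->
     0 < lam -> g alpha D Rtot N knf kpf lam = 0 ->
     0 < sqrt (knf / D) /\ 0 < lam /\
     0 < LambdaStar Rtot N (sqrt (knf / D)) lam) /\
  (forall mu lam : R,
     0 < mu -> 0 < lam -> 0 < LambdaStar Rtot N mu lam ->
     let knf := D * mu ^ 2 in
     let kpf := D * mu ^ 2 /
                (Rpower lam (alpha - 1) - Rpower lam alpha * N mu / (mu * Rtot)) in
     0 < knf /\ 0 < kpf /\
     Lambda alpha D Rtot N knf kpf <= 0 /\
     g alpha D Rtot N knf kpf lam = 0).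
Proof.
  intros Ha HD HR HL0 Hsol HN. split.
  - intros knf kpf lam Hk Hkp _ Hlam Hg.
    assert (Hm : 0 < sqrt (knf / D)) by (apply sqrt_lt_R0; apply Rdiv_lt_0_compat; lra).
    split; [exact Hm|]. split; [exact Hlam|].
    unfold g in Hg. rewrite (Rpower_split lam alpha Hlam) in Hg.
    unfold LambdaStar.
    set (m := sqrt (knf / D)) in *. set (P := Rpower lam (alpha - 1)) in *.
    assert (HP : 0 < P) by (unfold P, Rpower; apply exp_pos).
    assert (Hq : 0 < knf / kpf) by (apply Rdiv_lt_0_compat; lra).
    assert (E : P * (m * Rtot - lam * N m) = knf / kpf * (Rtot * m)).
    { apply (Rmult_eq_reg_r (/ (Rtot * m))).
      2: { apply Rinv_neq_0_compat; apply Rgt_not_eq, Rmult_lt_0_compat; lra. }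
      replace (knf / kpf) with (P - / Rtot * (P * lam) * / m * N m) by lra.
      field; lra. }
    assert (0 < knf / kpf * (Rtot * m)) by (apply Rmult_lt_0_compat; [lra| apply Rmult_lt_0_compat; lra]).
    rewrite <- E in H. nra.
  - intros mu lam Hmu Hlam HLs knf kpf.
    destruct (HN mu Hmu) as [pr Hpr].
    destruct (Hsol mu Hmu) as [_ [Hcont [_ [_ Hpos]]]].
    assert (Ha0 : 0 < mu * L0) by (apply Rmult_lt_0_compat; lra).
    assert (HNp : 0 < N mu).
    { rewrite <- Hpr. apply int_pos; [exact Ha0| exact Hpos| apply Hcont; lra]. }
    assert (Hs : sqrt (knf / D) = mu).
    { unfold knf. replace (D * mu ^ 2 / D) with (Rsqr mu) by (unfold Rsqr; field; lra).
      apply sqrt_Rsqr; lra. }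
    unfold LambdaStar in HLs.
    set (P := Rpower lam (alpha - 1)) in *.
    assert (HP : 0 < P) by (unfold P, Rpower; apply exp_pos).
    set (den := P - Rpower lam alpha * N mu / (mu * Rtot)) in *.
    assert (Hden : den = P * (mu * Rtot - lam * N mu) / (mu * Rtot)).
    { unfold den. rewrite (Rpower_split lam alpha Hlam). fold P. field; lra. }
    assert (Hdp : 0 < den).
    { rewrite Hden. apply Rdiv_lt_0_compat; [apply Rmult_lt_0_compat|apply Rmult_lt_0_compat]; lra. }
    assert (Hk : 0 < knf) by (unfold knf; apply Rmult_lt_0_compat; [lra| apply pow_lt; lra]).
    assert (Hkp : 0 < kpf) by (unfold kpf; apply Rdiv_lt_0_compat; [apply Rmult_lt_0_compat; [lra| apply pow_lt; lra] | exact Hdp]).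
    assert (Hq : knf / kpf = den) by (unfold kpf; fold knf; field; lra).
    split; [exact Hk|]. split; [exact Hkp|]. split.
    + unfold Lambda. rewrite Hs, Hq.
      set (M := mu * Rtot / N mu).
      assert (HM : 0 < M) by (unfold M; apply Rdiv_lt_0_compat; [apply Rmult_lt_0_compat|]; lra).
      set (s := lam / M).
      assert (Hs0 : 0 < s < 1).
      assert (HlM : lam < M).
      { apply (Rmult_lt_reg_r (N mu)); [exact HNp|]. unfold M.
        replace (mu * Rtot / N mu * N mu) with (mu * Rtot) by (field; lra). lra. }
      { unfold s. split; [apply Rdiv_lt_0_compat; lra|].
        apply (Rmult_lt_reg_r M); [exact HM|].
        replace (lam / M * M) with lam by (field; lra). lra. }
      assert (Ed : den = Rpower s (alpha - 1) * (1 - s) * Rpower M (alpha - 1)).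
      { rewrite Rmult_comm, <- Rmult_assoc, (Rmult_comm (Rpower M _)),
          Rpower_mult_distr by lra.
        replace (s * M) with lam by (unfold s; field; lra). rewrite Hden. fold P.
        unfold s, M. field. lra. }
      replace ((alpha - 1) / alpha * mu * Rtot / N mu) with ((alpha - 1) / alpha * M)
        by (unfold M; field; lra).
      rewrite <- Rpower_mult_distr by first [exact HM | apply Rdiv_lt_0_compat; lra].
      rewrite Ed.
      pose proof (key alpha s Ha Hs0).
      assert (0 < Rpower M (alpha - 1)) by (unfold Rpower; apply exp_pos).
      assert (Rpower s (alpha - 1) * (1 - s) * Rpower M (alpha - 1) <=
              / alpha * Rpower ((alpha - 1) / alpha) (alpha - 1) * Rpower M (alpha - 1))
        by (apply Rmult_le_compat_r; lra).
      lra.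
    + unfold g. rewrite Hs, Hq. unfold den, P. field. lra.
Qed.
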